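(* Let $U$ be a nonempty set and let $\pi,\sigma$ be partitions of $U$. Let $G(\sigma\Rightarrow\pi)$ be the simple undirected graph with vertex set $U$ in which two distinct elements $u,u'$ are adjacent if and only if $u,u'$ lie in the same block of $\pi$ but in different blocks of $\sigma$. Define the partition $\sigma\Rightarrow\pi$ of $U$ as follows: for each block $B\in\pi$, if there is a block $C\in\sigma$ with $B\subseteq C$, then $B$ is replaced by the singletons $\{u\}$, $u\in B$; otherwise $B$ is kept as a single block. Then the partition of $U$ into the connected components of $G(\sigma\Rightarrow\pi)$ equals $\sigma\Rightarrow\pi$.
   Context: A partition of $U$ is a set of pairwise disjoint nonempty subsets of $U$ (blocks) whose union is $U$. The graph $G(\sigma\Rightarrow\pi)$ arises from labelling each edge $u-u'$ of the complete graph on $U$ with $T_\pi$ if $u,u'$ are in different blocks of $\pi$ and $F_\pi$ otherwise (similarly for $\sigma$) and keeping exactly the edges on which the Boolean conditional $\sigma\supset\pi$ of the two truth values is $F$, i.e. those labelled $T_\sigma,F_\pi$. *)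

(* Defs.v *)
(* an arbitrary (possibly infinite) set U is a type T;
   subsets are predicates T -> Prop, and a partition is a set of blocks. *)
From Stdlib Require Import Relations.

Set Implicit Arguments.

Definition subset_of {T : Type} (A B : T -> Prop) : Prop := forall x, A x -> B x.

Definition is_partition {T : Type} (P : (T -> Prop) -> Prop) : Prop :=
  (forall B, P B -> exists x, B x) /\
  (forall B C, P B -> P C -> forall x, B x -> C x -> B = C) /\
  (forall x, exists B, P B /\ B x).

Definition same_block {T : Type} (P : (T -> Prop) -> Prop) (u u' : T) : Prop :=
  exists B, P B /\ B u /\ B u'.

Definition impl_graph {T : Type} (sigma pi : (T -> Prop) -> Prop) (u u' : T) : Prop :=
  u <> u' /\ same_block pi u u' /\ ~ same_block sigma u u'.

Definition components {T : Type} (adj : relation T) : (T -> Prop) -> Prop :=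
  fun C => exists u, C = (fun v => clos_refl_trans T adj u v).

Definition part_impl {T : Type} (sigma pi : (T -> Prop) -> Prop) : (T -> Prop) -> Prop :=
  fun C => exists B, pi B /\
    (((exists D, sigma D /\ subset_of B D) /\ exists u, B u /\ C = (fun v => v = u))
     \/ (~ (exists D, sigma D /\ subset_of B D) /\ C = B)).

(* Main.v *)
Require Import Defs.
From Stdlib Require Import Relations.
From Stdlib Require Import Classical FunctionalExtensionality PropExtensionality.

Section S.
Variables (T : Type) (pi sigma : (T -> Prop) -> Prop).
Hypotheses (Hpi : is_partition pi) (Hsigma : is_partition sigma).

Lemma edge_block B x y : pi B -> B x -> impl_graph sigma pi x y -> B y.
Proof.
  intros HB Bx [_ [[B' [HB' [B'x B'y]]] _]].
  destruct Hpi as [_ [Hd _]].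
  rewrite (Hd B B' HB HB' x Bx B'x). exact B'y.
Qed.

Lemma crt_block B x y : pi B -> clos_refl_trans T (impl_graph sigma pi) x y -> B x -> B y.
Proof.
  intros HB H; induction H; intros; [eapply edge_block; eauto|assumption|auto].
Qed.

Lemma nonsplit_iso B u : pi B -> B u -> (exists D, sigma D /\ subset_of B D) ->
  forall v, clos_refl_trans T (impl_graph sigma pi) u v <-> v = u.
Proof.
  intros HB Bu [D [HD Hsub]] v; split.
  - intro H. revert Bu. induction H; intros.
    + exfalso. assert (By : B y) by (eapply edge_block; eauto).
      destruct H as [_ [_ Hn]]. apply Hn. exists D.
      split; [exact HD|]. split; apply Hsub; assumption.
    + reflexivity.
    + assert (y = x) by auto. subst y. auto.
  - intros ->. apply rt_refl.
Qed.

Lemma split_conn B u : pi B -> B u -> ~ (exists D, sigma D /\ subset_of B D) ->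
  forall v, clos_refl_trans T (impl_graph sigma pi) u v <-> B v.
Proof.
  intros HB Bu Hns v; split.
  - intro H. eapply crt_block; eauto.
  - intro Bv.
    destruct Hsigma as [_ [Hsd Hsc]].
    destruct (Hsc u) as [Du [HDu Duu]].
    assert (Hw : exists w, B w /\ ~ Du w).
    { apply NNPP. intro Hn. apply Hns. exists Du. split; auto.
      intros w Bw. apply NNPP. intro Hw. apply Hn. eauto. }
    destruct Hw as [w [Bw nDw]].
    assert (Hnsw : forall x, Du x -> ~ same_block sigma x w).
    { intros x Dx [E [HE [Ex Ew]]]. apply nDw.
      rewrite <- (Hsd E Du HE HDu x Ex Dx). exact Ew. }
    destruct (classic (v = u)) as [->|Hvu]; [apply rt_refl|].
    destruct (classic (same_block sigma u v)) as [Hs|Hs].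
    + assert (Dv : Du v).
      { destruct Hs as [E [HE [Eu Ev]]].
        rewrite <- (Hsd E Du HE HDu u Eu Duu). exact Ev. }
      apply rt_trans with w.
      * apply rt_step. split; [intro; subst; auto|].
        split; [exists B; auto|]. apply Hnsw; auto.
      * apply rt_step. split; [intro; subst; auto|].
        split; [exists B; auto|].
        intros [E [HE [Ew Ev]]]. apply (Hnsw v Dv). exists E; auto.
    + apply rt_step. split; [congruence|]. split; [exists B; auto|]. exact Hs.
Qed.

End S.

Theorem mainTheorem3 (T : Type) (U_nonempty : inhabited T)
  (pi sigma : (T -> Prop) -> Prop)
  (Hpi : is_partition pi) (Hsigma : is_partition sigma) :
  components (impl_graph sigma pi) = part_impl sigma pi.
Proof.
  apply functional_extensionality; intro C.
  apply propositional_extensionality; split.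
  - intros [u ->].
    pose proof Hpi as [Hne [_ Hc]].
    destruct (Hc u) as [B [HB Bu]].
    exists B. split; [exact HB|].
    destruct (classic (exists D, sigma D /\ subset_of B D)) as [Hn|Hn].
    + left. split; [exact Hn|]. exists u. split; [exact Bu|].
      apply functional_extensionality; intro v.
      apply propositional_extensionality. eapply nonsplit_iso; eauto.
    + right. split; [exact Hn|].
      apply functional_extensionality; intro v.
      apply propositional_extensionality. eapply split_conn; eauto.
  - intros [B [HB [[Hn [u [Bu ->]]]|[Hn ->]]]].
    + exists u. apply functional_extensionality; intro v.
      apply propositional_extensionality. symmetry. eapply nonsplit_iso; eauto.
    + pose proof Hpi as [Hne _]. destruct (Hne B HB) as [u Bu].
      exists u. apply functional_extensionality; intro v.
      apply propositional_extensionality. symmetry. eapply split_conn; eauto.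
Qed.
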